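(* Let $\mathbb{K}$ be a field, $S=\mathbb{K}[x_1,\ldots,x_n]$, and let $I\subseteq S$ be a support-$2$ monomial ideal which is a Simis ideal and whose irreducible decomposition is minimal. Assume that $\alpha_{i,j}=1$ for every edge $\{x_i,x_j\}$ of $G(I)$. Then there exist a Simis square-free monomial ideal $J\subseteq S$ and a standard linear weighting $w$ of $S$ such that $I=J_w$.
   Context: For a monomial ideal $I$, $\mathcal{G}(I)$ denotes its minimal set of monomial generators. $I$ is a support-$2$ monomial ideal if $\mathcal{G}(I)\subseteq\{x_i^ax_j^b : 1\le i<j\le n,\ a,b\ge 1\}$. The underlying simple graph $G(I)$ has vertices $x_1,\ldots,x_n$ and an edge $\{x_i,x_j\}$ whenever some element of $\mathcal{G}(I)$ has support $\{x_i,x_j\}$. For an edge $\{x_i,x_j\}$, $\alpha_{i,j}$ is the number of elements of $\mathcal{G}(I)$ whose support is exactly $\{x_i,x_j\}$. Symbolic power: $I^{(s)}=\bigcap_{P\in\mathrm{MinAss}(I)}(I^sS_P\cap S)$ over the minimal primes of $I$; $I$ is Simis if $I^{(s)}=I^s$ for all $s\ge 1$. Irreducible monomial ideals are those generated by pure powers of variables; every monomial ideal has a unique irredundant decomposition $I=\bigcap Q_i$ into irreducible monomial ideals, called minimal if $\sqrt{Q_i}\ne\sqrt{Q_j}$ for $i\neq j$. A standard linear weighting is $w(a_1,\ldots,a_n)=(d_1a_1,\ldots,d_na_n)$ with fixed positive integers $d_i$, and for a monomial ideal $J$, $J_w$ is generated by the monomials obtained from $\mathcal{G}(J)$ by replacing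 each $x_i$ by $x_i^{d_i}$. *)

(* Defs.v *)
From HB Require Import structures.
From mathcomp Require Import all_boot all_order all_algebra.
From mathcomp Require Import mpoly.
Set Implicit Arguments. Unset Strict Implicit. Unset Printing Implicit Defensive.
Import GRing.Theory.
Local Open Scope ring_scope.

Section MonIdeals.
Variables (K : fieldType) (n : nat).
Local Notation S := {mpoly K[n]}.

Definition is_ideal (I : S -> Prop) : Prop :=
  I 0 /\ (forall f g, I f -> I g -> I (f + g)) /\ (forall f g, I g -> I (f * g)).

Definition ideal_gen (G : S -> Prop) : S -> Prop :=
  fun f => forall J, is_ideal J -> (forall g, G g -> J g) -> J f.

Definition same_ideal (I J : S -> Prop) : Prop := forall f, I f <-> J f.
Definition sub_ideal (I J : S -> Prop) : Prop := forall f, I f -> J f.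

Definition mon_ideal (M : 'X_{1..n} -> Prop) : S -> Prop :=
  ideal_gen (fun g => exists m, M m /\ g = 'X_[m]).

Definition is_monomial_ideal (I : S -> Prop) : Prop :=
  is_ideal I /\ exists M, same_ideal I (mon_ideal M).

(* m is in the minimal monomial generating set G(I): a monomial of I
   minimal for divisibility among monomials of I *)
Definition mingen (I : S -> Prop) (m : 'X_{1..n}) : Prop :=
  I 'X_[m] /\ forall m', I 'X_[m'] -> (forall i, m' i <= m i)%N -> m' = m.

Definition support2 (I : S -> Prop) : Prop :=
  is_monomial_ideal I /\
  forall m, mingen I m ->
    exists i j : 'I_n, [/\ (i < j)%N, (0 < m i)%N, (0 < m j)%N &
                          forall k, k != i -> k != j -> m k = 0%N].

(* alpha_{i,j} = 1 for every edge: two minimal generators with the same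
   support coincide *)
Definition alpha_one (I : S -> Prop) : Prop :=
  forall m1 m2, mingen I m1 -> mingen I m2 ->
    (forall k, (0 < m1 k)%N = (0 < m2 k)%N) -> m1 = m2.

Definition squarefree_monomial_ideal (J : S -> Prop) : Prop :=
  is_monomial_ideal J /\ forall m, mingen J m -> forall i, (m i <= 1)%N.

Definition ideal_pow (s : nat) (I : S -> Prop) : S -> Prop :=
  ideal_gen (fun f => exists fs : seq S,
     [/\ size fs = s, (forall g, g \in fs -> I g) & f = \prod_(g <- fs) g]).

Definition prime_ideal (P : S -> Prop) : Prop :=
  is_ideal P /\ ~ P 1 /\ forall f g, P (f * g) -> P f \/ P g.

Definition min_prime (I P : S -> Prop) : Prop :=
  prime_ideal P /\ sub_ideal I P /\
  forall Q, prime_ideal Q -> sub_ideal I Q -> sub_ideal Q P -> sub_ideal P Q.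

(* I S_P \cap S = { f | exists u not in P, u f in I } *)
Definition loc_contr (I P : S -> Prop) : S -> Prop :=
  fun f => exists u, ~ P u /\ I (u * f).

Definition symbolic_power (s : nat) (I : S -> Prop) : S -> Prop :=
  fun f => forall P, min_prime I P -> loc_contr (ideal_pow s I) P f.

Definition simis (I : S -> Prop) : Prop :=
  forall s, (1 <= s)%N -> same_ideal (symbolic_power s I) (ideal_pow s I).

Definition radical (I : S -> Prop) : S -> Prop := fun f => exists k, I (f ^+ k).

Definition irred_mon (A : {set 'I_n}) (e : 'I_n -> nat) : S -> Prop :=
  ideal_gen (fun g => exists2 i, i \in A & g = 'X_i ^+ (e i)).

(* I has an irredundant irreducible decomposition I = \cap_{l<k} Q_l
   whose components have pairwise distinct radicals *)
Definition minimal_irred_decomp (I : S -> Prop) : Prop :=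
  exists (k : nat) (A : 'I_k -> {set 'I_n}) (e : 'I_k -> 'I_n -> nat),
    [/\ forall l i, i \in A l -> (1 <= e l i)%N,
        same_ideal I (fun f => forall l, irred_mon (A l) (e l) f),
        forall l, ~ same_ideal I
                   (fun f => forall l', l' != l -> irred_mon (A l') (e l') f) &
        forall l l', l != l' ->
          ~ same_ideal (radical (irred_mon (A l) (e l)))
                       (radical (irred_mon (A l') (e l')))].

Definition weighted (d : 'I_n -> nat) (J : S -> Prop) : S -> Prop :=
  mon_ideal (fun m' => exists m, mingen J m /\ m' = [multinom (d i * m i)%N | i < n]).

End MonIdeals.

(* Main.v *)
Require Import Defs.
From HB Require Import structures.
From mathcomp Require Import all_boot all_order all_algebra.
From mathcomp Require Import mpoly.
From Stdlib Require Import ClassicalEpsilon.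
From mathcomp Require Import zify.
Set Implicit Arguments. Unset Strict Implicit. Unset Printing Implicit Defensive.
Import GRing.Theory.
Local Open Scope ring_scope.

Section P1.
Variables (K : fieldType) (n : nat).
Local Notation S := {mpoly K[n]}.
Local Notation mon := 'X_{1..n}.
Implicit Types (f h u : S) (m a b g : mon) (C A : {set 'I_n}) (e : 'I_n -> nat).
Local Notation MON := (@mon_ideal K n).

Definition lemn m1 m2 := forall t, (m1 t <= m2 t)%N.

Lemma ideal_gen_ideal (G : S -> Prop) : is_ideal (ideal_gen G).
Proof.
split; [|split].
- by move=> J [J0 _] _.
- move=> f g Hf Hg J IJ HG; case: (IJ) => _ [JD _].
  by apply: JD; [exact: Hf IJ HG|exact: Hg IJ HG].
- move=> f g Hg J IJ HG; case: (IJ) => _ [_ JM].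
  by apply: JM; exact: Hg IJ HG.
Qed.

Lemma ideal_gen_in (G : S -> Prop) (g : S) : G g -> ideal_gen G g.
Proof. by move=> Gg J _ HG; apply: HG. Qed.

Lemma ideal_gen_min (G : S -> Prop) (J : S -> Prop) :
  is_ideal J -> (forall g : S, G g -> J g) -> sub_ideal (ideal_gen G) J.
Proof. by move=> IJ HG f Hf; apply: Hf. Qed.

Lemma ideal_gen_ext (G G' : S -> Prop) :
  (forall g : S, G g <-> G' g) -> same_ideal (ideal_gen G) (ideal_gen G').
Proof.
move=> E f; split=> Hf J IJ HG; apply: Hf => // g /E; exact: HG.
Qed.

Section IdealProps.
Variable (J : S -> Prop).
Hypothesis IJ : is_ideal J.

Lemma idealM_l (f g : S) : J g -> J (f * g).
Proof. by case: IJ => _ [_ H]; apply: H. Qed.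
Lemma idealM_r (f g : S) : J f -> J (f * g).
Proof. by rewrite mulrC; apply: idealM_l. Qed.
Lemma idealD (f g : S) : J f -> J g -> J (f + g).
Proof. by case: IJ => _ [H _]; apply: H. Qed.
Lemma ideal0 : J 0.
Proof. by case: IJ. Qed.
Lemma idealZ c f : J f -> J (c *: f).
Proof. by rewrite -mul_mpolyC; apply: idealM_l. Qed.
Lemma ideal_sum (I : eqType) (r : seq I) (F : I -> S) :
  (forall x, x \in r -> J (F x)) -> J (\sum_(x <- r) F x).
Proof.
elim: r => [|x r IH] H; first by rewrite big_nil; apply: ideal0.
rewrite big_cons; apply: idealD; first by apply: H; rewrite inE eqxx.
by apply: IH => y yr; apply: H; rewrite inE yr orbT.
Qed.
End IdealProps.

Definition MI (M : mon -> Prop) f :=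
  forall m, m \in msupp f -> exists a, M a /\ lemn a m.

Lemma lemn_lem a m : lemn a m -> (a <= m)%MM.
Proof. by move=> h; apply/mnm_lepP. Qed.

Lemma mon_ideal_MI M f : MON M f <-> MI M f.
Proof.
split.
- move=> Hf; apply: Hf.
  + split; [|split].
    * by move=> m; rewrite -mpolyC0 msupp0.
    * move=> p q Hp Hq m /msuppD_le; rewrite mem_cat => /orP[/Hp|/Hq]//.
    * move=> p q Hq m /msuppM_le /allpairsP [[m1 m2] /= [_ m2q ->]].
      have [a [Ma la]] := Hq _ m2q; exists a; split=> // t.
      by rewrite mnmDE (leq_trans (la t)) // leq_addl.
  + move=> g [a [Ma ->]] m; rewrite msuppX inE => /eqP ->.
    by exists a; split=> // t.
- move=> H; rewrite [f]mpolyE; apply: (ideal_sum (ideal_gen_ideal _)).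
  move=> m /H [a [Ma la]]; apply: (idealZ (ideal_gen_ideal _)).
  have -> : 'X_[m] = 'X_[m - a] * 'X_[a] :> S.
    by rewrite -mpolyXD submK //; apply: lemn_lem.
  apply: (idealM_l (ideal_gen_ideal _)).
  by apply: ideal_gen_in; exists a.
Qed.

Lemma mon_idealX M m : MON M 'X_[m] <-> exists a, M a /\ lemn a m.
Proof.
rewrite mon_ideal_MI; split.
- by move=> H; apply: H; rewrite msuppX inE.
- by move=> H m'; rewrite msuppX inE => /eqP ->.
Qed.

Lemma mon_ideal_ideal M : is_ideal (MON M).
Proof. exact: ideal_gen_ideal. Qed.

Lemma mon_ideal_sub M (J : S -> Prop) :
  is_ideal J -> (forall a, M a -> J 'X_[a]) -> sub_ideal (MON M) J.
Proof.
by move=> IJ H; apply: ideal_gen_min => // g [a [Ma ->]]; apply: H.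
Qed.

Lemma mon_ideal_gen M a : M a -> MON M 'X_[a].
Proof. by move=> Ma; apply: ideal_gen_in; exists a. Qed.

Definition Msum (A B : mon -> Prop) m := exists a b, [/\ A a, B b & m = (a + b)%MM].

Lemma mon_idealM (A B : mon -> Prop) f (g : S) :
  MON A f -> MON B g -> MON (Msum A B) (f * g).
Proof.
rewrite !mon_ideal_MI => Hf Hg m /msuppM_le /allpairsP [[m1 m2] /= [m1f m2g ->]].
have [a [Aa la]] := Hf _ m1f; have [b [Bb lb]] := Hg _ m2g.
exists (a + b)%MM; split; first by exists a, b.
by move=> t; rewrite !mnmDE leq_add.
Qed.

Lemma mon_ideal_mono (A B : mon -> Prop) :
  (forall a, A a -> exists b, B b /\ lemn b a) -> sub_ideal (MON A) (MON B).
Proof.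
move=> H; apply: mon_ideal_sub; first exact: mon_ideal_ideal.
move=> a /H [b [Bb lb]]; apply/mon_idealX; by exists b.
Qed.



Lemma descent_aux (I : S -> Prop) N m :
  (mdeg m < N)%N -> I 'X_[m] -> exists g : mon, mingen I g /\ lemn g m.
Proof.
elim: N m => [//|N IH] m ltmN Im.
case: (Classical_Prop.classic (mingen I m)) => [mg|nmg].
  by exists m; split=> // t.
have [m' [Im' [lm' ne]]] : exists m', I 'X_[m'] /\ lemn m' m /\ m' <> m.
  apply: Classical_Prop.NNPP => H; apply: nmg; split=> // m' Im' lm'.
  apply: Classical_Prop.NNPP => ne; apply: H; by exists m'.
have lt : (mdeg m' < mdeg m)%N.
  have E : m = (m' + (m - m'))%MM by rewrite addmC submK //; apply: lemn_lem.
  rewrite [in X in (_ < X)%N]E mdegD -[X in (X < _)%N]addn0 ltn_add2l lt0n mdeg_eq0.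
  by apply/eqP => E0; apply: ne; rewrite E E0 addm0.
have [g [mg lg]] := IH m' (leq_trans lt (ltnSE ltmN)) Im'.
by exists g; split=> // t; apply: leq_trans (lg t) (lm' t).
Qed.

Lemma descent (I : S -> Prop) m : I 'X_[m] -> exists g : mon, mingen I g /\ lemn g m.
Proof. exact: (@descent_aux I (mdeg m).+1). Qed.

Lemma monideal_mingen (I : S -> Prop) :
  is_monomial_ideal I -> same_ideal I (MON (mingen I)).
Proof.
move=> [II [M EM]] f; split.
- move=> /EM; apply: mon_ideal_mono => a Ma.
  have : I 'X_[a] by apply/EM; apply: mon_ideal_gen.
  by move/descent.
- by apply: mon_ideal_sub => // a [].
Qed.

Lemma monideal_X (I : S -> Prop) m :
  is_monomial_ideal I -> (I 'X_[m] <-> exists g : mon, mingen I g /\ lemn g m).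
Proof. by move=> MI; rewrite (monideal_mingen MI) mon_idealX. Qed.

Definition Qgen (A : {set 'I_n}) (e : 'I_n -> nat) a :=
  exists2 i, i \in A & a = (U_(i) *+ e i)%MM.
Definition Qm A e := MON (Qgen A e).

Lemma mnm1n_E (i t : 'I_n) k : ((U_(i) *+ k)%MM t = (i == t) * k)%N.
Proof. by rewrite mulmnE mnm1E. Qed.

Lemma irred_Qm A e : same_ideal (irred_mon A e) (Qm A e).
Proof.
apply: ideal_gen_ext => g; split.
- by case=> i iA ->; exists (U_(i) *+ e i)%MM; split; [exists i|rewrite mpolyXn].
- by case=> a [[i iA ->] ->]; exists i => //; rewrite mpolyXn.
Qed.

Lemma QmX A e m : Qm A e 'X_[m] <-> exists2 i, i \in A & (e i <= m i)%N.
Proof.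
rewrite /Qm mon_idealX; split.
- case=> a [[i iA ->] la]; exists i => //.
  by have := la i; rewrite mnm1n_E eqxx mul1n.
- case=> i iA le; exists (U_(i) *+ e i)%MM; split; first by exists i.
  by move=> t; rewrite mnm1n_E; case: eqP => [<-|]; rewrite ?mul1n ?mul0n.
Qed.

Lemma Qm_MI A e f :
  Qm A e f <-> forall m, m \in msupp f -> exists2 i, i \in A & (e i <= m i)%N.
Proof.
rewrite /Qm mon_ideal_MI; split=> H m /H.
- by move=> H'; apply/QmX; apply/mon_idealX.
- by move/QmX/mon_idealX.
Qed.

Lemma Qm_ideal A e : is_ideal (Qm A e).
Proof. exact: mon_ideal_ideal. Qed.

Definition PC (C : {set 'I_n}) := Qm C (fun _ => 1%N).

Definition touch (C : {set 'I_n}) m := [exists i in C, (0 < m i)%N].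

Lemma touchP (C : {set 'I_n}) m : reflect (exists2 i, i \in C & (0 < m i)%N) (touch C m).
Proof.
apply: (iffP existsP).
- by case=> i /andP[iC lt]; exists i.
- by case=> i iC lt; exists i; rewrite iC.
Qed.

Lemma PCX C m : PC C 'X_[m] <-> touch C m.
Proof. by rewrite /PC QmX; split => /touchP. Qed.

Lemma PC_MI C f : PC C f <-> all (touch C) (msupp f).
Proof.
rewrite /PC Qm_MI; split.
- by move=> H; apply/allP => m /H /touchP.
- by move=> /allP H m /H /touchP.
Qed.

Definition lqC C : n.-tuple S := [tuple (if i \in C then 0 else 'X_i) | i < n].

Lemma rhoX C m : 'X_[m] \mPo lqC C = if touch C m then 0 else 'X_[m].
Proof.
rewrite comp_mpolyX; case: (touchP C m) => [[i iC lt]|nt].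
  rewrite (bigD1 i) //= tnth_mktuple iC expr0n.
  by rewrite -[(m i == 0)%N]negbK -lt0n lt /= mul0r.
rewrite [RHS]mpolyXE_id; apply: eq_bigr => i _; rewrite tnth_mktuple.
case: ifP => // iC; suff -> : m i = 0%N by rewrite !expr0.
by apply/eqP; rewrite -leqn0 leqNgt; apply/negP => lt; apply: nt; exists i.
Qed.

Lemma rhoE C f :
  f \mPo lqC C = \sum_(m <- msupp f | ~~ touch C m) f@_m *: 'X_[m].
Proof.
rewrite comp_mpolyEX [RHS]big_mkcond /=; apply: eq_bigr => m _.
by rewrite rhoX; case: touch; rewrite ?scaler0.
Qed.

Lemma rho0 C f : (f \mPo lqC C == 0) = all (touch C) (msupp f).
Proof.
rewrite rhoE -big_filter.
case: allP => [H|H].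
  rewrite big_seq big1 ?eqxx // => m; rewrite mem_filter => /andP[/negP nt /H] //.
have [m0 m0f nt] : exists2 m0, m0 \in msupp f & ~~ touch C m0.
  apply: Classical_Prop.NNPP => H'; apply: H => m mf.
  by apply: Classical_Prop.NNPP => nt; apply: H'; exists m => //; apply/negP.
have P := msupp_sumX (r := [seq m <- msupp f | ~~ touch C m]) (f := fun m => f@_m).
have /P {}P : uniq [seq m <- msupp f | ~~ touch C m] by rewrite filter_uniq ?msupp_uniq.
have /P {}P : {in [seq m <- msupp f | ~~ touch C m], forall m, f@_m != 0}.
  by move=> m; rewrite mem_filter -mcoeff_msupp => /andP[].
apply/negP => /eqP E; move: P; rewrite E -mpolyC0 msupp0 => /perm_mem/(_ m0).
by rewrite mem_filter nt m0f in_nil.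
Qed.

Lemma PC_prime C : prime_ideal (PC C).
Proof.
split; first exact: Qm_ideal.
split.
  by rewrite -mpolyX0 PCX => /touchP [i _]; rewrite mnm0E.
move=> f g; rewrite !PC_MI -!rho0 rmorphM mulf_eq0 => /orP[]; by [left|right].
Qed.



Definition cover (I : S -> Prop) C := forall g, mingen I g -> touch C g.
Definition mincover (I : S -> Prop) C :=
  cover I C /\ forall C', C' \subset C -> cover I C' -> C \subset C'.

Lemma prime_ideal_ideal (P : S -> Prop) : prime_ideal P -> is_ideal P.
Proof. by case. Qed.

Lemma prime_prod (P : S -> Prop) (I : eqType) (r : seq I) (F : I -> S) :
  prime_ideal P -> P (\prod_(x <- r) F x) -> exists2 x, x \in r & P (F x).
Proof.
move=> [_ [N1 PM]]; elim: r => [|x r IH]; first by rewrite big_nil.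
rewrite big_cons => /PM [Px|/IH [y yr Py]].
  by exists x; rewrite ?inE ?eqxx.
by exists y; rewrite ?inE ?yr ?orbT.
Qed.

Lemma prime_exp (P : S -> Prop) (g : S) k :
  prime_ideal P -> P (g ^+ k) -> (0 < k)%N /\ P g.
Proof.
move=> [_ [N1 PM]]; elim: k => [|k IH]; first by rewrite expr0.
by rewrite exprS => /PM [Pg|/IH [_ Pg]].
Qed.

Lemma prime_X (P : S -> Prop) m :
  prime_ideal P -> P 'X_[m] -> exists2 i, (0 < m i)%N & P 'X_i.
Proof.
move=> PP; rewrite mpolyXE_id => /(prime_prod PP) [i _ /(prime_exp PP) [lt Pi]].
by exists i.
Qed.

Lemma PC_Xi C i : PC C 'X_i <-> i \in C.
Proof.
rewrite PCX; split.
- by move/touchP => [j jC]; rewrite mnm1E lt0b => /eqP ->.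
- by move=> iC; apply/touchP; exists i; rewrite // mnm1E eqxx.
Qed.

Lemma PC_mono C C' : C' \subset C -> sub_ideal (PC C') (PC C).
Proof.
move=> sub f; rewrite !PC_MI => /allP H; apply/allP => m /H /touchP [i iC lt].
by apply/touchP; exists i => //; apply: (subsetP sub).
Qed.

Lemma cover_sub I C : is_monomial_ideal I -> cover I C -> sub_ideal I (PC C).
Proof.
move=> MI cv f /(monideal_mingen MI); apply: mon_ideal_sub; first exact: Qm_ideal.
by move=> a /cv; rewrite PCX.
Qed.

Lemma PC_sub (P : S -> Prop) C :
  is_ideal P -> (forall i, i \in C -> P 'X_i) -> sub_ideal (PC C) P.
Proof.
by move=> IP H; apply: mon_ideal_sub => // a [i iC ->]; apply: H.
Qed.

Lemma minprime_PC (I P : S -> Prop) :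
  is_monomial_ideal I -> min_prime I P ->
  exists C, same_ideal P (PC C) /\ mincover I C.
Proof.
move=> MI [PP [IP Pmin]].
pose pb i := if excluded_middle_informative (P 'X_i) then true else false.
pose C := [set i | pb i].
have inC i : i \in C <-> P 'X_i.
  rewrite inE /pb; case: excluded_middle_informative => //; split=> //.
have cv : cover I C.
  move=> g mg; have /IP /(prime_X PP) [i lt Pi] : I 'X_[g] by case: mg.
  by apply/touchP; exists i => //; apply/inC.
have PCP : sub_ideal (PC C) P.
  by apply: PC_sub; [exact: prime_ideal_ideal| move=> i /inC].
have EP : same_ideal P (PC C).
  move=> f; split; last exact: PCP.
  by apply: (Pmin _ (PC_prime C) (cover_sub MI cv) PCP).
exists C; split=> //; split=> // C' sub cv'.
have H := Pmin _ (PC_prime C') (cover_sub MI cv')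
  (fun f Hf => PCP f (PC_mono sub Hf)).
apply/subsetP => i /inC /H; by rewrite PC_Xi.
Qed.

Lemma mincover_minprime I C :
  is_monomial_ideal I -> mincover I C -> min_prime I (PC C).
Proof.
move=> MI [cv cmin]; split; first exact: PC_prime.
split; first exact: cover_sub.
move=> Q PQ IQ QP; apply: PC_sub; first exact: prime_ideal_ideal.
move=> i iC.
have ncv : ~ cover I (C :\ i).
  move=> cv'; have := cmin _ (subsetDl C [set i]) cv'.
  by move/subsetP/(_ i iC); rewrite !inE eqxx.
have [g mg ntg] : exists2 g, mingen I g & ~ touch (C :\ i) g.
  apply: Classical_Prop.NNPP => H; apply: ncv => g mg.
  by apply: Classical_Prop.NNPP => nt; apply: H; exists g.
have /IQ /(prime_X PQ) [j lt Qj] : I 'X_[g] by case: mg.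
have jC : j \in C by rewrite -PC_Xi; apply: QP.
case: (eqVneq j i) => [<- //|ne].
by exfalso; apply: ntg; apply/touchP; exists j => //; rewrite !inE ne.
Qed.

Lemma pow_sub_sym s (I : S -> Prop) f : ideal_pow s I f -> symbolic_power s I f.
Proof.
move=> H P [[_ [N1 _]] _]; exists 1; split=> //; by rewrite mul1r.
Qed.



Definition sums s (G : mon -> Prop) a := exists l : seq mon,
  [/\ size l = s, (forall x, x \in l -> G x) & a = \big[+%MM/0%MM]_(x <- l) x].

Lemma pow_sub_mon s G f : ideal_pow s (MON G) f -> MON (sums s G) f.
Proof.
apply: ideal_gen_min; first exact: mon_ideal_ideal.
move=> g [fs [<- Hfs ->]] {g f s}.
elim: fs Hfs => [|g0 fs IH] Hfs.
  rewrite big_nil -mpolyX0; apply: mon_ideal_gen.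
  by exists [::]; rewrite big_nil.
rewrite big_cons.
have H0 : MON G g0 by apply: Hfs; rewrite inE eqxx.
have H1 : MON (sums (size fs) G) (\prod_(g <- fs) g).
  by apply: IH => x xf; apply: Hfs; rewrite inE xf orbT.
apply: (mon_ideal_mono _ (mon_idealM H0 H1)) => a [a1 [b [Ga1 [l [sl Hl ->]] ->]]].
exists (a1 + \big[+%MM/0%MM]_(x <- l) x)%MM; split; last by move=> t.
exists (a1 :: l); split; first by rewrite /= sl.
  by move=> x; rewrite inE => /orP[/eqP ->|/Hl].
by rewrite big_cons.
Qed.

Lemma pow_ideal s (I : S -> Prop) : is_ideal (ideal_pow s I).
Proof. exact: ideal_gen_ideal. Qed.

Lemma pow_monX s G a : sums s G a -> ideal_pow s (MON G) 'X_[a].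
Proof.
case=> l [sl Hl ->]; apply: ideal_gen_in.
exists [seq 'X_[x] | x <- l]; split; first by rewrite size_map.
  by move=> g /mapP [x xl ->]; apply: mon_ideal_gen; apply: Hl.
by rewrite big_map mpolyX_prod.
Qed.

Lemma pow_ext s (I I' : S -> Prop) :
  same_ideal I I' -> same_ideal (ideal_pow s I) (ideal_pow s I').
Proof.
move=> E; apply: ideal_gen_ext => f; split; case=> fs [sz Hfs ->];
  exists fs; split=> // g /Hfs; by rewrite E.
Qed.

Lemma pow2 (I : S -> Prop) (f h : S) : I f -> I h -> ideal_pow 2 I (f * h).
Proof.
move=> If Ih; apply: ideal_gen_in; exists [:: f; h]; split=> //.
  by move=> g; rewrite !inE => /orP[/eqP->|/eqP->].
by rewrite !big_cons big_nil mulr1.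
Qed.

Lemma mon_ideal_ext (G G' : mon -> Prop) :
  (forall a, G a <-> G' a) -> same_ideal (MON G) (MON G').
Proof.
move=> E; apply: ideal_gen_ext => g; split; case=> a [/E Ga ->]; by exists a.
Qed.

Definition degA (A : {set 'I_n}) m := (\sum_(i in A) m i)%N.

Lemma degAD A m1 m2 : degA A (m1 + m2)%MM = (degA A m1 + degA A m2)%N.
Proof. by rewrite /degA -big_split; apply: eq_bigr => i _; rewrite mnmDE. Qed.

Definition Dgen A N m := (N <= degA A m)%N.

Lemma Dpow A (f : S) N : MON (Dgen A 1) f -> MON (Dgen A N) (f ^+ N).
Proof.
move=> H1; elim: N => [|N IH].
  by rewrite expr0 -mpolyX0; apply: mon_ideal_gen.
rewrite exprS; apply: (mon_ideal_mono _ (mon_idealM H1 IH)).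
move=> a [a1 [b [Ha1 Hb ->]]]; exists (a1 + b)%MM; split; last by move=> t.
by rewrite /Dgen degAD -add1n leq_add.
Qed.

Lemma rad_irred A e (e' : 'I_n -> nat) :
  (forall i, i \in A -> (1 <= e i)%N) ->
  sub_ideal (radical (irred_mon (K:=K) A e)) (radical (irred_mon A e')).
Proof.
move=> He f [k /irred_Qm Hk].
have H1 : MON (Dgen A 1) (f ^+ k).
  apply: (mon_ideal_mono _ Hk) => a [i iA ->]; exists (U_(i) *+ e i)%MM.
  split; last by move=> t.
  rewrite /Dgen /degA (bigD1 i) //= mnm1n_E eqxx mul1n.
  exact: leq_trans (He i iA) (leq_addr _ _).
pose N := (\sum_(i in A) e' i).+1.
exists (k * N)%N; rewrite exprM; apply/irred_Qm.
move: (Dpow (N:=N) H1); apply: mon_ideal_sub; first exact: Qm_ideal.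
move=> a Ha; apply/QmX.
apply: Classical_Prop.NNPP => H; move: Ha; rewrite /Dgen /N ltnNge; apply/negP/negPn.
apply: leq_sum => i iA; rewrite leqNgt; apply/negP => lt; apply: H.
by exists i => //; apply: ltnW.
Qed.

End P1.

Section Core.
Variables (K : fieldType) (n : nat).
Local Notation S := {mpoly K[n]}.
Local Notation mon := 'X_{1..n}.
Local Notation MON := (@mon_ideal K n).
Implicit Types (f h u : S) (m a b g : mon) (C A : {set 'I_n}) (e : 'I_n -> nat).

Variable I : S -> Prop.
Hypotheses (HS2 : support2 I) (HSim : simis I) (HD : minimal_irred_decomp I)
  (HA : alpha_one I).

Lemma MIh : is_monomial_ideal I.
Proof. by case: HS2. Qed.

Lemma mingenX g : mingen I g -> I 'X_[g].
Proof. by case. Qed.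

Lemma sp2 g : mingen I g -> exists i j : 'I_n,
  i != j /\ forall t, (0 < g t)%N = (t == i) || (t == j).
Proof.
move=> mg; have [i [j [ltij gi gj H]]] := HS2.2 g mg.
exists i, j; split; first by rewrite neq_ltn ltij.
move=> t; case: (eqVneq t i) => [->//|ti]; case: (eqVneq t j) => [->//|tj].
by rewrite (H t ti tj).
Qed.

Lemma sp_pair g i j : mingen I g -> i != j -> (0 < g i)%N -> (0 < g j)%N ->
  forall t, (0 < g t)%N = (t == i) || (t == j).
Proof.
move=> mg nij gi gj; have [i0 [j0 [n0 H]]] := sp2 mg.
move: gi gj; rewrite !H => hi hj t; rewrite H.
case/orP: hi => /eqP Ei; case/orP: hj => /eqP Ej; subst.
- by rewrite eqxx in nij.
- by [].
- by rewrite orbC.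
- by rewrite eqxx in nij.
Qed.

Lemma alpha_eq g g' i j : mingen I g -> mingen I g' -> i != j ->
  (0 < g i)%N -> (0 < g j)%N -> (0 < g' i)%N -> (0 < g' j)%N -> g = g'.
Proof.
move=> mg mg' nij gi gj gi' gj'; apply: HA => // t.
by rewrite (sp_pair mg nij gi gj) (sp_pair mg' nij gi' gj').
Qed.

Lemma alpha_sp g g' i j : mingen I g -> mingen I g' ->
  (forall t, (0 < g t)%N = (t == i) || (t == j)) ->
  (forall t, (0 < g' t)%N = (t == i) || (t == j)) -> g = g'.
Proof. by move=> mg mg' H H'; apply: HA => // t; rewrite H H'. Qed.

Lemma other g i : mingen I g -> (0 < g i)%N ->
  exists2 j, j != i & forall t, (0 < g t)%N = (t == i) || (t == j).
Proof.
move=> mg gi; have [i0 [j0 [n0 H]]] := sp2 mg.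
move: (gi); rewrite H => /orP[] /eqP E; subst.
- by exists j0; rewrite // eq_sym.
- by exists i0 => // t; rewrite H orbC.
Qed.

Lemma DEC C : mincover I C -> exists e : 'I_n -> nat,
  [/\ forall t, t \in C -> (1 <= e t)%N,
      forall g, mingen I g -> exists2 t, t \in C & (e t <= g t)%N &
      forall t, t \in C -> exists v : mon,
        (forall s, s \in C -> v s = 0%N) /\ I 'X_[(v + U_(t) *+ e t)%MM]].
Proof.
move=> [cv cmin].
have [k [A [e [He1 HI _ Hrad]]]] := HD.
have HIQ f : I f <-> forall l, Qm (A l) (e l) f.
  by rewrite HI; split=> H l; apply/irred_Qm; apply: H.
have Acov l : cover I (A l).
  move=> g mg; have /HIQ /(_ l) /QmX [t tA le] := mingenX mg.
  by apply/touchP; exists t => //; apply: leq_trans (He1 l t tA) le.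
pose Mx := (\max_(l < k) \max_(i < n) e l i)%N.
have leM l i : (e l i <= Mx)%N.
  apply: (leq_trans _ (leq_bigmax l)).
  exact: (leq_bigmax (F := fun i => e l i) i).
pose v0 : mon := [multinom (if i \in C then 0 else Mx)%N | i < n].
have v0C s : s \in C -> v0 s = 0%N by move=> sC; rewrite mnmE sC.
have escape l : A l != C -> exists2 s, s \in A l & s \notin C.
  move=> ne; apply/subsetPn; apply/negP => sub; move/negP: ne; apply.
  by rewrite eqEsubset sub (cmin _ sub (Acov l)).
have QA l : A l != C -> forall m, lemn v0 m -> Qm (A l) (e l) 'X_[m].
  move=> /escape [s sA sC] m le; apply/QmX; exists s => //.
  by apply: leq_trans (le s); rewrite mnmE (negbTE sC).
case: (pickP (fun l => A l == C)) => [l /eqP Al|none]; last first.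
  have : I 'X_[v0] by apply/HIQ => l; apply: QA; rewrite ?none // => t.
  move/descent => [g [mg lg]]; have /touchP [t tC lt] := cv g mg.
  by move: (leq_trans lt (lg t)); rewrite v0C.
exists (e l); split.
- by move=> t; rewrite -Al; apply: He1.
- move=> g mg; have /HIQ /(_ l) /QmX [t tA le] := mingenX mg.
  by exists t; rewrite -?Al.
- move=> t tC; exists v0; split; first exact: v0C.
  apply/HIQ => l'; case: (eqVneq l' l) => [->|ne].
    apply/QmX; exists t; first by rewrite Al.
    by rewrite mnmDE mnm1n_E eqxx mul1n leq_addl.
  apply: QA; last by move=> s; rewrite mnmDE leq_addr.
  apply/negP => /eqP Al'; apply: (Hrad l' l ne) => f; split.
  + rewrite Al' -Al; apply: rad_irred => i.
    by rewrite Al -Al'; apply: He1.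
  + rewrite Al' -Al; apply: rad_irred => i iA; exact: He1.
Qed.



Lemma SRC C p1 p2 (w : mon) : I 'X_[p1] -> I 'X_[p2] ->
  (forall s, s \in C -> (p1 s + p2 s <= w s)%N) ->
  exists u, ~ PC C u /\ ideal_pow 2 I (u * 'X_[w]).
Proof.
move=> I1 I2 H; exists 'X_[(p1 + p2 - w)%MM]; split.
  move/PCX/touchP => [s sC]; rewrite mnmBE mnmDE subn_gt0 ltnNge.
  by rewrite H.
have le : ((p1 + p2) <= (p1 + p2 - w) + w)%MM.
  by apply/mnm_lepP => s; rewrite !(mnmDE, mnmBE); lia.
rewrite -mpolyXD -(submK le) mpolyXD mpolyXD.
by apply: (idealM_l (pow_ideal _ _)); apply: pow2.
Qed.

Section Setting.
Variables (i j k : 'I_n) (m m' : mon).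
Hypotheses (mg : mingen I m) (mg' : mingen I m') (nij : i != j) (nik : i != k)
  (njk : j != k)
  (spm : forall t, (0 < m t)%N = (t == i) || (t == j))
  (spm' : forall t, (0 < m' t)%N = (t == i) || (t == k))
  (ltm : (m i < m' i)%N).

Lemma wE t : ((m + m' - U_(i))%MM t = m t + m' t - (i == t))%N.
Proof. by rewrite mnmBE mnmDE mnm1E. Qed.

Lemma zero_of (g : mon) x y t : (forall t, (0 < g t)%N = (t == x) || (t == y)) ->
  t != x -> t != y -> g t = 0%N.
Proof.
by move=> H tx ty; apply/eqP; rewrite -leqn0 leqNgt H (negbTE tx) (negbTE ty).
Qed.

Lemma facts :
  (0 < m i)%N /\ (0 < m j)%N /\ (0 < m' i)%N /\ (0 < m' k)%N /\ m' j = 0%N /\ m k = 0%N.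
Proof.
do !split; rewrite ?spm ?spm' ?eqxx ?orbT //.
- by apply: (zero_of spm'); rewrite // eq_sym.
- by apply: (zero_of spm); rewrite // eq_sym.
Qed.

Lemma wi : ((m + m' - U_(i))%MM i = m i + m' i - 1)%N.
Proof. by rewrite wE eqxx. Qed.
Lemma wj : ((m + m' - U_(i))%MM j = m j)%N.
Proof. by case: facts => _ [_ [_ [_ [mj' _]]]]; rewrite wE (negbTE nij) mj' addn0 subn0. Qed.
Lemma wk : ((m + m' - U_(i))%MM k = m' k)%N.
Proof. by case: facts => _ [_ [_ [_ [_ mk]]]]; rewrite wE (negbTE nik) mk add0n subn0. Qed.
Lemma w0 t : t != i -> t != j -> t != k -> ((m + m' - U_(i))%MM t = 0)%N.
Proof.
move=> ti tj tk; rewrite wE (zero_of spm ti tj) (zero_of spm' ti tk).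
by rewrite sub0n.
Qed.

Lemma classify g : mingen I g -> (forall t, g t <= (m + m' - U_(i))%MM t)%N ->
  [\/ g = m, g = m' |
      g i = 0%N /\ forall t, (0 < g t)%N = (t == j) || (t == k)].
Proof.
move=> mgg le.
have gs t : (0 < g t)%N -> [|| t == i, t == j | t == k].
  move=> lt; apply/negPn/negP => /norP [ti /norP [tj tk]].
  by move: (leq_trans lt (le t)); rewrite w0.
case: (posnP (g i)) => [gi0|gi].
  apply: Or33; split=> //.
  have [i0 [j0 [n0 H]]] := sp2 mgg.
  have hi0 : (0 < g i0)%N by rewrite H eqxx.
  have hj0 : (0 < g j0)%N by rewrite H eqxx orbT.
  have ni t : (0 < g t)%N -> t != i by move=> lt; apply/eqP => E; move: lt; rewrite E gi0.
  have := gs _ hi0; have := gs _ hj0; rewrite (negbTE (ni _ hi0)) (negbTE (ni _ hj0)) /=.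
  move=> hj hi; have gjk : (0 < g j)%N /\ (0 < g k)%N.
    move: hj hi; case/orP=> /eqP Ej0; case/orP=> /eqP Ei0; subst.
    - by rewrite eqxx in n0.
    - by split.
    - by split.
    - by rewrite eqxx in n0.
  case: gjk => gj gk; exact: sp_pair mgg njk gj gk.
have [x nx spx] := other mgg gi.
have gx : (0 < g x)%N by rewrite spx eqxx orbT.
have /or3P [/eqP xi|/eqP xj|/eqP xk] := gs _ gx.
- by rewrite xi eqxx in nx.
- apply: Or31; subst x; case: facts => mi [mj _].
  exact: alpha_eq mgg mg nij gi gx mi mj.
- apply: Or32; subst x; case: facts => _ [_ [m'i [m'k _]]].
  exact: alpha_eq mgg mg' nik gi gx m'i m'k.
Qed.

Lemma W : ideal_pow 2 I 'X_[(m + m' - U_(i))%MM] ->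
  exists g, [/\ mingen I g, g i = 0%N &
    forall t, (g t + g t <= (m + m' - U_(i))%MM t)%N].
Proof.
move/(pow_ext 2 (monideal_mingen MIh))/pow_sub_mon/mon_idealX.
case=> a [[l [sl Hl ->]] la].
case: l sl Hl la => [|g1 [|g2 [|]]] // _ Hl la.
have mg1 : mingen I g1 by apply: Hl; rewrite !inE eqxx.
have mg2 : mingen I g2 by apply: Hl; rewrite !inE eqxx orbT.
have H t : (g1 t + g2 t <= (m + m' - U_(i))%MM t)%N.
  by have := la t; rewrite !big_cons big_nil !mnmDE mnm0E addn0.
have c1 := classify mg1 (fun t => leq_trans (leq_addr _ _) (H t)).
have c2 := classify mg2 (fun t => leq_trans (leq_addl _ _) (H t)).
have Hi := H i; have Hj := H j; have Hk := H k.
rewrite wi in Hi; rewrite wj in Hj; rewrite wk in Hk.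
case: facts => mi [mj [m'i [m'k [mj' mk]]]].
case: c1 => [E1|E1|[g1i sp1]]; case: c2 => [E2|E2|[g2i sp2']]; subst;
  try (exfalso; lia).
- have := sp2' j; rewrite eqxx /= => ?; exfalso; lia.
- have := sp2' k; rewrite eqxx orbT => ?; exfalso; lia.
- have := sp1 j; rewrite eqxx /= => ?; exfalso; lia.
- have := sp1 k; rewrite eqxx orbT => ?; exfalso; lia.
- have E : g1 = g2 by apply: (alpha_sp mg1 mg2 sp1 sp2').
  subst; exists g2; split=> // t; exact: H.
Qed.

Lemma INSYM : symbolic_power 2 I 'X_[(m + m' - U_(i))%MM].
Proof.
move=> P mP; have [C [EP mc]] := minprime_PC MIh mP.
have [e [E0 E1 E2]] := DEC mc.
suff [u [nu Hu]] : exists u, ~ PC C u /\ ideal_pow 2 I (u * 'X_[(m + m' - U_(i))%MM]).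
  by exists u; split=> // /EP.
case: facts => mi [mj [m'i [m'k [mj' mk]]]].
have SRC2 t1 t2 : t1 \in C -> t2 \in C ->
    (forall s, s \in C -> ((t1 == s) * e t1 + (t2 == s) * e t2 <=
                           (m + m' - U_(i))%MM s)%N) ->
    exists u, ~ PC C u /\ ideal_pow 2 I (u * 'X_[(m + m' - U_(i))%MM]).
  move=> t1C t2C B; have [v1 [v1C Iv1]] := E2 _ t1C; have [v2 [v2C Iv2]] := E2 _ t2C.
  apply: (SRC Iv1 Iv2) => s sC; rewrite !mnmDE !mnm1n_E v1C // v2C //.
  exact: B.
case: (boolP (i \in C)) => iC; last first.
  apply: (SRC (mingenX mg) (mingenX mg')) => s sC.
  have si : i != s by apply/eqP => E; move: iC; rewrite E sC.
  by rewrite wE (negbTE si) subn0.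
have [t tC le] := E1 _ mg.
have : (0 < m t)%N := leq_trans (E0 _ tC) le.
rewrite spm => /orP[]/eqP Et; subst t.
  apply: (SRC2 i i) => // s sC; case: (eqVneq i s) => [<-|ne].
    by rewrite wi mul1n; lia.
  by rewrite mul0n.
have [t' t'C le'] := E1 _ mg'.
have : (0 < m' t')%N := leq_trans (E0 _ t'C) le'.
rewrite spm' => /orP[]/eqP Et; subst t'.
  apply: (SRC2 j i) => // s sC.
  case: (eqVneq j s) => [<-|nj]; first by rewrite (negbTE nij) wj /=; lia.
  case: (eqVneq i s) => [<-|ni]; first by rewrite wi /=; lia.
  by rewrite /=; lia.
apply: (SRC2 j k) => // s sC.
case: (eqVneq j s) => [<-|nj]; first by rewrite (eq_sym k j) (negbTE njk) wj /=; lia.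
case: (eqVneq k s) => [<-|nk]; first by rewrite wk /=; lia.
by rewrite /=; lia.
Qed.

Lemma STEP : exists g, [/\ mingen I g, g i = 0%N &
    forall t, (g t + g t <= (m + m' - U_(i))%MM t)%N].
Proof. by apply: W; apply/(HSim (s:=2)) => //; apply: INSYM. Qed.

End Setting.


Lemma nolt g g' i : mingen I g -> mingen I g' -> (0 < g i)%N -> (0 < g' i)%N ->
  ~ (g i < g' i)%N.
Proof.
move=> mg mg' gi g'i lt.
have [j nj spg] := other mg gi.
have [k nk spg'] := other mg' g'i.
have njk : j != k.
  apply/eqP => E; subst k; have E := alpha_sp mg mg' spg spg'.
  by rewrite E ltnn in lt.
have nij : i != j by rewrite eq_sym.
have nik : i != k by rewrite eq_sym.
have [h [mh hi Hh]] := STEP mg mg' nij nik njk spg spg' lt.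
have hw t : (h t <= (g + g' - U_(i))%MM t)%N := leq_trans (leq_addr _ _) (Hh t).
have g'j : g' j = 0%N by apply: (zero_of spg').
case: (classify mg mg' nij nik njk spg spg' mh hw) => [E|E|[_ sph]].
- by move: gi; rewrite -E hi.
- by move: g'i; rewrite -E hi.
have hj : (0 < h j)%N by rewrite sph eqxx.
have ltj : (h j < g j)%N.
  have := Hh j; rewrite wE (negbTE nij) g'j addn0 subn0; lia.
have spg2 t : (0 < g t)%N = (t == j) || (t == i) by rewrite spg orbC.
have nji : j != i := nj.
have nki : k != i := nk.
have [h' [mh' h'j Hh']] := STEP mh mg njk nji nki sph spg2 ltj.
have hw' t : (h' t <= (h + g - U_(j))%MM t)%N := leq_trans (leq_addr _ _) (Hh' t).
case: (classify mh mg njk nji nki sph spg2 mh' hw') => [E|E|[_ sph'']].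
- by move: hj; rewrite -E h'j.
- by move: h'j; rewrite E => E0; move: (spg j); rewrite E0 eqxx orbT.
have E : h' = g'.
  by apply: (alpha_sp mh' mg' (i:=i) (j:=k)) => // t; rewrite sph'' orbC.
subst h'; have := Hh' i; rewrite wE (negbTE nji) hi subn0 add0n; lia.
Qed.

Lemma uniform g g' i : mingen I g -> mingen I g' -> (0 < g i)%N -> (0 < g' i)%N ->
  g i = g' i.
Proof.
move=> mg mg' gi g'i; case: (ltngtP (g i) (g' i)) => // lt; exfalso.
- exact: nolt mg mg' gi g'i lt.
- exact: nolt mg' mg g'i gi lt.
Qed.

Definition dd (t : 'I_n) : nat :=
  match excluded_middle_informative (exists g, mingen I g /\ (0 < g t)%N) with
  | left H => (proj1_sig (constructive_indefinite_description _ H)) t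
  | right _ => 1%N end.

Lemma dd_pos t : (1 <= dd t)%N.
Proof.
rewrite /dd; case: excluded_middle_informative => // H.
by case: constructive_indefinite_description => g0 [].
Qed.

Lemma ddP g t : mingen I g -> g t = (dd t * (0 < g t))%N.
Proof.
move=> mg; case: (posnP (g t)) => [->|gt]; first by rewrite muln0.
rewrite ?gt muln1 /dd; case: excluded_middle_informative => [H|H]; last first.
  by exfalso; apply: H; exists g.
case: constructive_indefinite_description => g0 [mg0 g0t] /=.
exact: uniform.
Qed.

Definition ind g : mon := [multinom ((0 < g t)%N : nat) | t < n].
Definition dm (x : mon) : mon := [multinom (dd t * x t)%N | t < n].

Lemma dm_ind g : mingen I g -> dm (ind g) = g.
Proof. by move=> mg; apply/mnmP => t; rewrite !mnmE -ddP. Qed.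

Lemma ind_pos g t : (0 < ind g t)%N = (0 < g t)%N.
Proof. by rewrite mnmE; case: (0 < g t)%N. Qed.

Lemma ind_le g t : (ind g t <= 1)%N.
Proof. by rewrite mnmE; case: (0 < g t)%N. Qed.

Definition Jg b := exists g, mingen I g /\ b = ind g.
Definition J := MON Jg.

Lemma J_mon : is_monomial_ideal J.
Proof. by split; [exact: mon_ideal_ideal|exists Jg]. Qed.

Lemma mingenJ b : mingen J b <-> Jg b.
Proof.
split.
- case=> /mon_idealX [a [Ja la]] Hmin.
  by have <- := Hmin a (mon_ideal_gen Ja) la.
- case=> g [mg ->]; split; first by apply: mon_ideal_gen; exists g.
  move=> b' /mon_idealX [a [[g' [mg' ->]] la]] lb.
  have sub t : (0 < g' t)%N -> (0 < g t)%N.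
    rewrite -(ind_pos g') -(ind_pos g) => p; exact: leq_trans p (leq_trans (la t) (lb t)).
  have [x [y [nxy spx]]] := sp2 mg'.
  have gx : (0 < g' x)%N by rewrite spx eqxx.
  have gy : (0 < g' y)%N by rewrite spx eqxx orbT.
  have E := alpha_eq mg' mg nxy gx gy (sub _ gx) (sub _ gy); subst g'.
  by apply/mnmP => t; apply/eqP; rewrite eqn_leq lb la.
Qed.

Lemma coverJ C : cover J C <-> cover I C.
Proof.
split=> cv g.
- move=> mg; have /cv /touchP [t tC] : mingen J (ind g).
    by apply/mingenJ; exists g.
  by rewrite ind_pos => lt; apply/touchP; exists t.
- move=> /mingenJ [g' [mg' ->]]; have /touchP [t tC lt] := cv _ mg'.
  by apply/touchP; exists t; rewrite ?ind_pos.
Qed.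

Lemma mincoverJ C : mincover J C <-> mincover I C.
Proof.
split=> [[cv H]|[cv H]]; split; try by apply/coverJ.
- by move=> C' s /coverJ; apply: H.
- by move=> C' s /coverJ; apply: H.
Qed.

Lemma weightedJ : same_ideal I (weighted dd J).
Proof.
move=> f; rewrite (monideal_mingen MIh f); apply: mon_ideal_ext => a; split.
- move=> ma; exists (ind a); split; first by apply/mingenJ; exists a.
  by rewrite -/(dm (ind a)) dm_ind.
- by case=> m0 [/mingenJ [g [mg ->]] ->]; rewrite -/(dm (ind g)) dm_ind.
Qed.

Definition lw : n.-tuple S := [tuple (('X_i : S) ^+ dd i) | i < n].

Lemma phiX m : 'X_[m] \mPo lw = 'X_[dm m].
Proof.
rewrite comp_mpolyX [RHS]mpolyXE_id; apply: eq_bigr => t _.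
by rewrite tnth_mktuple -exprM mnmE.
Qed.

Lemma dm_inj : injective dm.
Proof.
move=> x y /mnmP E; apply/mnmP => t; move: (E t); rewrite !mnmE => /eqP.
by rewrite eqn_pmul2l ?dd_pos // => /eqP.
Qed.

Lemma phi_coef f m0 : (f \mPo lw)@_(dm m0) = f@_m0.
Proof.
have -> : f@_m0 = (\sum_(x <- msupp f) f@_x *: 'X_[x])@_m0 by rewrite -mpolyE.
rewrite comp_mpolyEX !raddf_sum /=; apply: eq_bigr => x _.
by rewrite phiX !mcoeffZ !mcoeffX (inj_eq dm_inj).
Qed.

Lemma phi_supp f m0 : m0 \in msupp f -> dm m0 \in msupp (f \mPo lw).
Proof. by rewrite !mcoeff_msupp phi_coef. Qed.

Lemma phiPC C u : ~ PC C u -> ~ PC C (u \mPo lw).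
Proof.
rewrite !PC_MI => nu H; apply: nu; apply/allP => x xu.
move: (allP H _ (phi_supp xu)) => /touchP [t tC]; rewrite mnmE muln_gt0 => /andP[_ xt].
by apply/touchP; exists t.
Qed.

Lemma dm_sum (l : seq mon) :
  dm (\big[+%MM/0%MM]_(x <- l) x) = \big[+%MM/0%MM]_(x <- l) dm x.
Proof.
elim: l => [|x l IH].
  by rewrite !big_nil; apply/mnmP => t; rewrite !mnmE muln0.
by rewrite !big_cons -IH; apply/mnmP => t; rewrite !(mnmE, mnmDE) mulnDr.
Qed.

Lemma phi_pow s (g : S) : ideal_pow s J g -> ideal_pow s I (g \mPo lw).
Proof.
move/pow_sub_mon => H.
have IJ : is_ideal (fun g : S => ideal_pow s I (g \mPo lw)).
  split; [|split].
  - by rewrite /= raddf0; apply: (ideal0 (pow_ideal s I)).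
  - by move=> p q Hp Hq; rewrite /= raddfD; apply: (idealD (pow_ideal s I)).
  - by move=> p q Hq; rewrite /= rmorphM; apply: (idealM_l (pow_ideal s I)).
suff Hg : forall a, sums s Jg a -> ideal_pow s I ('X_[a] \mPo lw).
  exact: (mon_ideal_sub IJ Hg H).
move=> b Hb; rewrite phiX; apply/(pow_ext s (monideal_mingen MIh)); apply: pow_monX.
case: Hb => l [sl Hl ->]; exists (map dm l); split.
- by rewrite size_map.
- by move=> x /mapP [y /Hl [g0 [mg0 ->]] ->]; rewrite dm_ind.
- by rewrite dm_sum big_map.
Qed.

Lemma phi_back s f : ideal_pow s I (f \mPo lw) -> ideal_pow s J f.
Proof.
move/(pow_ext s (monideal_mingen MIh))/pow_sub_mon => H.
suff : MON (sums s Jg) f.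
  by apply: mon_ideal_sub; [apply: pow_ideal|move=> b Hb; apply: pow_monX].
apply/mon_ideal_MI => m0 m0f.
have [a [[l [sl Hl ->]] la]] := (proj1 (mon_ideal_MI _ _) H) _ (phi_supp m0f).
exists (\big[+%MM/0%MM]_(x <- map ind l) x); split.
  exists (map ind l); split; first by rewrite size_map.
    by move=> x /mapP [y yl ->]; exists y; split=> //; apply: Hl.
  by [].
have E : \big[+%MM/0%MM]_(x <- l) x = dm (\big[+%MM/0%MM]_(x <- map ind l) x).
  rewrite dm_sum big_map; apply: eq_big_seq => x xl.
  by rewrite dm_ind //; apply: Hl.
move=> t; move: (la t); rewrite E !mnmE leq_pmul2l //; exact: dd_pos.
Qed.

Lemma simisJ : simis J.
Proof.
move=> s s1 f; split; last exact: pow_sub_sym.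
move=> Hf; apply: phi_back; apply: (proj1 (HSim s1 _)) => P mP.
have [C [EP mc]] := minprime_PC MIh mP.
have mcJ : mincover J C by apply/mincoverJ.
have [u [nu Hu]] := Hf _ (mincover_minprime J_mon mcJ).
exists (u \mPo lw); split; first by move/EP; apply: phiPC.
by rewrite -rmorphM; apply: phi_pow.
Qed.

Lemma final : exists (J : S -> Prop) (d : 'I_n -> nat),
    [/\ squarefree_monomial_ideal J, simis J,
        (forall i, (1 <= d i)%N) &
        same_ideal I (weighted d J)].
Proof.
exists J, dd; split.
- split; first exact: J_mon.
  by move=> m /mingenJ [g [_ ->]] t; apply: ind_le.
- exact: simisJ.
- exact: dd_pos.
- exact: weightedJ.
Qed.

End Core.

Local Close Scope ring_scope.

Theorem lemma2p1 (K : fieldType) (n : nat) (I : {mpoly K[n]} -> Prop) :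
  support2 I -> simis I -> minimal_irred_decomp I -> alpha_one I ->
  exists (J : {mpoly K[n]} -> Prop) (d : 'I_n -> nat),
    [/\ squarefree_monomial_ideal J, simis J,
        (forall i, (1 <= d i)%N) &
        same_ideal I (weighted d J)].
Proof. move=> HS2 HSim HD HA; exact: final. Qed.
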